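(* Let $\mathbb{X}$ be a real or complex Banach algebra with identity, $\mathcal{G}$ its group of units, $k\ge1$ an integer, $a_0,\dots,a_k,b_0,\dots,b_k\in\mathbb{X}$ with $a_k\ne0$ or $b_k\ne0$, and $g_n:\mathbb{X}\to\mathbb{X}$ ($n\ge0$) functions satisfying $|g_n(\xi)|\le\sigma|\xi|$ for all $\xi\in\mathbb{X}$ and all $n$, for some real $\sigma>0$. Then every solution $\{x_n\}$ of $$x_{n+1}=\sum_{i=0}^{k}a_ix_{n-i}+g_n\Big(\sum_{i=0}^{k}b_ix_{n-i}\Big),\quad n\ge0,$$ converges to $0$ in norm provided either (a) $\sum_{i=0}^{k}(|a_i|+\sigma|b_i|)<1$; or (b) the polynomials $P(\xi)=\xi^{k+1}-\sum_{i=0}^{k}a_i\xi^{k-i}$ and $Q(\xi)=\sum_{i=0}^{k}b_i\xi^{k-i}$ have a common root $\rho\in\mathcal{G}$ with $|\rho|<1$ and $$\sum_{i=0}^{k-1}\big(|p_i|+\sigma|q_i|\big)<1,$$ where $p_i=\rho^{i+1}-a_0\rho^i-\cdots-a_i$ and $q_i=b_0\rho^i+b_1\rho^{i-1}+\cdots+b_i$ for $i=0,\dots,k-1$.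
   Context: A Banach algebra with identity is a Banach space $\mathbb{X}$ (norm $|\cdot|$) with an associative bilinear multiplication satisfying $|xy|\le|x||y|$ and an identity $1$ with $|1|=1$. $\mathcal{G}$ is the set of invertible elements. Polynomials are evaluated with coefficients on the left. Solutions are generated by iteration from arbitrary initial values $x_0,\dots,x_{-k}\in\mathbb{X}$. *)

(* Defs.v *)
From Stdlib Require Import Reals.
Open Scope R_scope.

(* A (real) Banach algebra with identity. A complex Banach algebra is in
   particular a real one (restriction of scalars), so this covers both. *)
Record BanachAlgebra := {
  carrier :> Type;
  zero : carrier;
  one : carrier;
  add : carrier -> carrier -> carrier;
  opp : carrier -> carrier;
  mul : carrier -> carrier -> carrier;
  scal : R -> carrier -> carrier;
  norm : carrier -> R;
  add_assoc : forall x y z, add x (add y z) = add (add x y) z;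
  add_comm : forall x y, add x y = add y x;
  add_zero : forall x, add x zero = x;
  add_opp : forall x, add x (opp x) = zero;
  scal_one : forall x, scal 1 x = x;
  scal_assoc : forall r s x, scal r (scal s x) = scal (r * s) x;
  scal_addr : forall r x y, scal r (add x y) = add (scal r x) (scal r y);
  scal_addl : forall r s x, scal (r + s) x = add (scal r x) (scal s x);
  mul_assoc : forall x y z, mul x (mul y z) = mul (mul x y) z;
  mul_addl : forall x y z, mul (add x y) z = add (mul x z) (mul y z);
  mul_addr : forall x y z, mul x (add y z) = add (mul x y) (mul x z);
  mul_scall : forall r x y, mul (scal r x) y = scal r (mul x y);
  mul_scalr : forall r x y, mul x (scal r y) = scal r (mul x y);
  mul_one_l : forall x, mul one x = x;
  mul_one_r : forall x, mul x one = x;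
  norm_eq0 : forall x, norm x = 0 -> x = zero;
  norm_zero : norm zero = 0;
  norm_triangle : forall x y, norm (add x y) <= norm x + norm y;
  norm_scal : forall r x, norm (scal r x) = Rabs r * norm x;
  norm_mul : forall x y, norm (mul x y) <= norm x * norm y;
  norm_one : norm one = 1;
  complete : forall u : nat -> carrier,
    (forall eps, eps > 0 -> exists N, forall m n, (m >= N)%nat -> (n >= N)%nat ->
        norm (add (u m) (opp (u n))) < eps) ->
    exists l, forall eps, eps > 0 -> exists N, forall n, (n >= N)%nat ->
        norm (add (u n) (opp l)) < eps
}.

Arguments zero {b}.
Arguments one {b}.
Arguments add {b}.
Arguments opp {b}.
Arguments mul {b}.
Arguments scal {b}.
Arguments norm {b}.

Definition sub {X : BanachAlgebra} (x y : X) : X := add x (opp y).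

Fixpoint bpow {X : BanachAlgebra} (x : X) (n : nat) : X :=
  match n with O => one | S m => mul x (bpow x m) end.

Fixpoint bsum {X : BanachAlgebra} (n : nat) (f : nat -> X) : X :=
  match n with O => zero | S m => add (bsum m f) (f m) end.

Definition is_unit {X : BanachAlgebra} (x : X) : Prop :=
  exists y : X, mul x y = one /\ mul y x = one.

Definition conv_to_zero {X : BanachAlgebra} (u : nat -> X) : Prop :=
  forall eps, eps > 0 -> exists N, forall n, (n >= N)%nat -> norm (u n) < eps.

Definition polyP {X : BanachAlgebra} (k : nat) (a : nat -> X) (xi : X) : X :=
  sub (bpow xi (S k)) (bsum (S k) (fun i => mul (a i) (bpow xi (k - i)))).

Definition polyQ {X : BanachAlgebra} (k : nat) (b : nat -> X) (xi : X) : X :=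
  bsum (S k) (fun i => mul (b i) (bpow xi (k - i))).

Definition pcoef {X : BanachAlgebra} (a : nat -> X) (rho : X) (i : nat) : X :=
  sub (bpow rho (S i)) (bsum (S i) (fun j => mul (a j) (bpow rho (i - j)))).

Definition qcoef {X : BanachAlgebra} (b : nat -> X) (rho : X) (i : nat) : X :=
  bsum (S i) (fun j => mul (b j) (bpow rho (i - j))).

(* Main.v *)
Require Import Defs.
From Stdlib Require Import Reals Lra Lia.
Open Scope R_scope.
Lemma le_sum_term (v : nat -> R) : (forall n, 0 <= v n) ->
  forall N j, (j <= N)%nat -> v j <= sum_f_R0 v N.
Proof.
  intros Hv N; induction N as [|N IH]; intros j Hj.
  - assert (j = 0%nat) by lia; subst; simpl; lra.
  - simpl. destruct (Nat.eq_dec j (S N)) as [->|Hne].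
    + pose proof (cond_pos_sum v N Hv); lra.
    + pose proof (IH j ltac:(lia)); pose proof (Hv (S N)); lra.
Qed.

Lemma decay1 (m : nat) (c v : nat -> R) :
  (forall i, 0 <= c i) -> sum_f_R0 c m < 1 -> (forall n, 0 <= v n) ->
  (forall n, v (n + m + 1)%nat <= sum_f_R0 (fun i => c i * v (n + m - i)%nat) m) ->
  forall eps, eps > 0 -> exists N, forall n, (n >= N)%nat -> v n < eps.
Proof.
  intros Hc Hth Hv Hrec eps Heps.
  set (th := sum_f_R0 c m) in *.
  set (B := sum_f_R0 v m).
  assert (HB : 0 <= B) by (apply cond_pos_sum; auto).
  assert (Hth0 : 0 <= th) by (apply cond_pos_sum; auto).
  assert (Hstep : forall L beta, 0 <= beta -> (forall j, (L <= j)%nat -> v j <= beta) ->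
     forall j, (L + m + 1 <= j)%nat -> v j <= th * beta).
  { intros L beta Hb HL j Hj.
    replace j with ((j - m - 1) + m + 1)%nat by lia.
    eapply Rle_trans; [apply Hrec|].
    unfold th; rewrite (Rmult_comm (sum_f_R0 c m)), scal_sum.
    apply sum_Rle; intros i Hi.
    apply Rmult_le_compat_l; [auto|]. apply HL; lia. }
  assert (Hbase : forall j, v j <= B).
  { intro j; induction j as [j IH] using (well_founded_induction Wf_nat.lt_wf).
    destruct (Compare_dec.le_lt_dec j m) as [Hjm|Hjm].
    - apply le_sum_term; auto.
    - replace j with ((j - m - 1) + m + 1)%nat by lia.
      eapply Rle_trans; [apply Hrec|].
      apply Rle_trans with (th * B).
      + unfold th; rewrite (Rmult_comm (sum_f_R0 c m)), scal_sum. apply sum_Rle; intros i Hi.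
        apply Rmult_le_compat_l; [auto|]. apply IH; lia.
      + nra. }
  assert (Hq : forall q j, (q * (m + 1) <= j)%nat -> v j <= B * th ^ q).
  { induction q as [|q IH]; intros j Hj.
    - simpl; rewrite Rmult_1_r; auto.
    - replace (B * th ^ S q) with (th * (B * th ^ q)) by (simpl; ring).
      apply (Hstep (q * (m+1))%nat); [| exact IH | lia].
      apply Rmult_le_pos; [auto| apply pow_le; auto]. }
  assert (Habs : Rabs th < 1) by (rewrite Rabs_right; lra).
  destruct (pow_lt_1_zero th Habs (eps / (B + 1))) as [q Hq2].
  { apply Rdiv_lt_0_compat; lra. }
  exists (q * (m + 1))%nat. intros n Hn.
  eapply Rle_lt_trans; [apply Hq; exact Hn|].
  specialize (Hq2 q (le_n _)).
  rewrite Rabs_right in Hq2 by (apply Rle_ge, pow_le; auto).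
  assert (H0 : 0 <= th ^ q) by (apply pow_le; auto).
  apply Rmult_lt_compat_l with (r := B + 1) in Hq2; [|lra].
  replace ((B + 1) * (eps / (B + 1))) with eps in Hq2 by (field; lra).
  nra.
Qed.

Lemma decay2 (r : R) (u w : nat -> R) : 0 <= r -> r < 1 ->
  (forall n, 0 <= u n) ->
  (forall n, u (S n) <= r * u n + w n) ->
  (forall eps, eps > 0 -> exists N, forall n, (n >= N)%nat -> w n < eps) ->
  forall eps, eps > 0 -> exists N, forall n, (n >= N)%nat -> u n < eps.
Proof.
  intros Hr0 Hr1 Hu Hrec Hw eps Heps.
  destruct (Hw (eps * (1 - r) / 2)) as [N HN].
  { apply Rdiv_lt_0_compat; [apply Rmult_lt_0_compat|]; lra. }
  assert (Hd : forall d, u (N + d)%nat <= r ^ d * u N + eps / 2).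
  { induction d as [|d IH].
    - rewrite Nat.add_0_r; simpl; pose proof (Hu N); lra.
    - replace (N + S d)%nat with (S (N + d)) by lia.
      eapply Rle_trans; [apply Hrec|].
      specialize (HN (N + d)%nat ltac:(lia)).
      apply Rmult_le_compat_l with (r := r) in IH; [|lra].
      simpl. nra. }
  assert (Habs : Rabs r < 1) by (rewrite Rabs_right; lra).
  pose proof (Hu N) as HuN.
  destruct (pow_lt_1_zero r Habs (eps / (2 * (u N + 1)))) as [d0 Hd0].
  { apply Rdiv_lt_0_compat; lra. }
  exists (N + d0)%nat. intros n Hn.
  replace n with (N + (n - N))%nat by lia.
  eapply Rle_lt_trans; [apply Hd|].
  specialize (Hd0 (n - N)%nat ltac:(lia)).
  assert (H0 : 0 <= r ^ (n - N)) by (apply pow_le; auto).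
  rewrite Rabs_right in Hd0 by lra.
  apply Rmult_lt_compat_l with (r := u N + 1) in Hd0; [|lra].
  replace ((u N + 1) * (eps / (2 * (u N + 1)))) with (eps / 2) in Hd0 by (field; lra).
  nra.
Qed.

Section Alg.
Variable X : BanachAlgebra.
Implicit Types x y z u v w : X.

Lemma add0l x : add zero x = x.
Proof. rewrite add_comm; apply add_zero. Qed.
Lemma addNr x : add (opp x) x = zero.
Proof. rewrite add_comm; apply add_opp. Qed.
Lemma addKl x z : add x (add (opp x) z) = z.
Proof. rewrite add_assoc, add_opp; apply add0l. Qed.
Lemma addNKl x z : add (opp x) (add x z) = z.
Proof. rewrite add_assoc, addNr; apply add0l. Qed.
Lemma add_cancel x y z : add x y = add x z -> y = z.
Proof. intro H. rewrite <- (addNKl x y), H. apply addNKl. Qed.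
Lemma opp_unique x y : add x y = zero -> y = opp x.
Proof. intro H. apply (add_cancel x). rewrite H, add_opp. reflexivity. Qed.
Lemma opp_zero : opp (@zero X) = zero.
Proof. symmetry; apply opp_unique; apply add_zero. Qed.
Lemma opp_add x y : opp (add x y) = add (opp x) (opp y).
Proof.
  symmetry; apply opp_unique.
  rewrite <- add_assoc, (add_comm _ (opp x)), (add_assoc _ y), add_opp, add0l, add_opp.
  reflexivity.
Qed.
Lemma addNK x y : add (add x (opp y)) y = x.
Proof. rewrite <- add_assoc, addNr; apply add_zero. Qed.
Lemma addK x y : add (add x y) (opp y) = x.
Proof. rewrite <- add_assoc, add_opp; apply add_zero. Qed.
Lemma mul0r x : mul zero x = zero.
Proof.
  apply (add_cancel (mul zero x)). rewrite add_zero, <- mul_addl, add_zero. reflexivity.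
Qed.
Lemma mulr0 x : mul x zero = zero.
Proof.
  apply (add_cancel (mul x zero)). rewrite add_zero, <- mul_addr, add_zero. reflexivity.
Qed.
Lemma mulNr x y : mul (opp x) y = opp (mul x y).
Proof. apply opp_unique. rewrite <- mul_addl, add_opp. apply mul0r. Qed.
Lemma mulrN x y : mul x (opp y) = opp (mul x y).
Proof. apply opp_unique. rewrite <- mul_addr, add_opp. apply mulr0. Qed.
Lemma scal0 x : scal 0 x = zero.
Proof.
  apply (add_cancel (scal 0 x)). rewrite add_zero, <- scal_addl, Rplus_0_l. reflexivity.
Qed.
Lemma scalN1 x : scal (-1) x = opp x.
Proof.
  apply opp_unique. rewrite <- (scal_one _ x) at 1. rewrite <- scal_addl.
  replace (1 + -1) with 0 by ring. apply scal0.
Qed.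
Lemma norm_opp x : norm (opp x) = norm x.
Proof.
  rewrite <- scalN1, norm_scal. replace (Rabs (-1)) with 1; [ring|]. unfold Rabs; destruct Rcase_abs; lra.
Qed.
Lemma norm_ge0 x : 0 <= norm x.
Proof.
  pose proof (norm_triangle X x (opp x)). rewrite add_opp, norm_zero, norm_opp in H. lra.
Qed.

Lemma add_swap x y z : add x (add y z) = add y (add x z).
Proof. rewrite !add_assoc, (add_comm _ x y). reflexivity. Qed.
Lemma addNCK (q s : X) : add (opp q) (add s q) = s.
Proof. rewrite (add_comm _ s q). apply addNKl. Qed.
Lemma bsum_S K (f : nat -> X) : bsum (S K) f = add (bsum K f) (f K).
Proof. reflexivity. Qed.
Lemma bsum_ext K (f h : nat -> X) : (forall i, (i < K)%nat -> f i = h i) -> bsum K f = bsum K h.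
Proof.
  induction K as [|K IH]; intro H; simpl; [reflexivity|].
  rewrite IH by (intros; apply H; lia). rewrite H by lia. reflexivity.
Qed.
Lemma bsum_opp K (f : nat -> X) : bsum K (fun i => opp (f i)) = opp (bsum K f).
Proof.
  induction K as [|K IH]; simpl; [symmetry; apply opp_zero|].
  rewrite IH, opp_add. reflexivity.
Qed.
Lemma bsum_mulN K (f w : nat -> X) :
  bsum K (fun i => mul (opp (f i)) (w i)) = opp (bsum K (fun i => mul (f i) (w i))).
Proof.
  rewrite <- bsum_opp. apply bsum_ext. intros. apply mulNr.
Qed.
Lemma bsum_mulr K (f : nat -> X) r : mul (bsum K f) r = bsum K (fun i => mul (f i) r).
Proof.
  induction K as [|K IH]; simpl; [apply mul0r|]. rewrite mul_addl, IH. reflexivity.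
Qed.
Lemma bpow_S_r x m : bpow x (S m) = mul (bpow x m) x.
Proof.
  induction m as [|m IH]; simpl in *; [rewrite mul_one_l, mul_one_r; reflexivity|].
  rewrite IH, mul_assoc, IH. reflexivity.
Qed.

Lemma norm_bsum2 (s : R) K (f1 f2 : nat -> X) : 0 <= s ->
  norm (bsum (S K) f1) + s * norm (bsum (S K) f2)
  <= sum_f_R0 (fun i => norm (f1 i) + s * norm (f2 i)) K.
Proof.
  intro Hs. induction K as [|K IH].
  - simpl. rewrite !add0l. lra.
  - change (bsum (S (S K)) f1) with (add (bsum (S K) f1) (f1 (S K))).
    change (bsum (S (S K)) f2) with (add (bsum (S K) f2) (f2 (S K))).
    simpl sum_f_R0.
    pose proof (norm_triangle X (bsum (S K) f1) (f1 (S K))).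
    pose proof (norm_triangle X (bsum (S K) f2) (f2 (S K))).
    apply Rmult_le_compat_l with (r := s) in H0; [|exact Hs]. lra.
Qed.

Lemma bsum_shift (c : nat -> X) (rho : X) i :
  mul (bsum (S i) (fun j => mul (c j) (bpow rho (i - j)))) rho
  = bsum (S i) (fun j => mul (c j) (bpow rho (S i - j))).
Proof.
  rewrite bsum_mulr. apply bsum_ext. intros j Hj.
  rewrite <- mul_assoc, <- bpow_S_r. f_equal. f_equal. lia.
Qed.

Lemma pcoef0 (a : nat -> X) rho : pcoef a rho 0 = add (mul one rho) (opp (a 0%nat)).
Proof.
  unfold pcoef, sub; simpl. rewrite mul_one_r, mul_one_l, add0l, mul_one_r. reflexivity.
Qed.
Lemma pcoefS (a : nat -> X) rho i :
  pcoef a rho (S i) = add (mul (pcoef a rho i) rho) (opp (a (S i))).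
Proof.
  unfold pcoef, sub. rewrite mul_addl, mulNr, bsum_shift, <- bpow_S_r.
  rewrite (bsum_S (S i)). cbv beta.
  rewrite Nat.sub_diag. simpl bpow. rewrite mul_one_r, opp_add, add_assoc. reflexivity.
Qed.
Lemma qcoef0 (b : nat -> X) rho : qcoef b rho 0 = add (mul zero rho) (b 0%nat).
Proof.
  unfold qcoef; simpl. rewrite mul0r, !add0l, mul_one_r. reflexivity.
Qed.
Lemma qcoefS (b : nat -> X) rho i :
  qcoef b rho (S i) = add (mul (qcoef b rho i) rho) (b (S i)).
Proof.
  unfold qcoef. rewrite bsum_shift.
  rewrite (bsum_S (S i)). cbv beta.
  rewrite Nat.sub_diag. simpl bpow. rewrite mul_one_r. reflexivity.
Qed.

Lemma tele (x zz : nat -> X) (rho e : X) (c d : nat -> X)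
  (hz : forall m, zz m = sub (x (S m)) (mul rho (x m)))
  (h0 : c 0%nat = add (mul e rho) (d 0%nat))
  (hS : forall i, c (S i) = add (mul (c i) rho) (d (S i))) (T : nat) :
  forall K, (K <= T)%nat ->
  add (mul e (zz T)) (bsum K (fun i => mul (c i) (zz (T - 1 - i)%nat)))
  = add (mul e (x (S T))) (add (opp (mul (c K) (x (T - K)%nat)))
                               (bsum (S K) (fun i => mul (d i) (x (T - i)%nat)))).
Proof.
  induction K as [|K IH]; intro HK.
  - simpl bsum. rewrite Nat.sub_0_r, add_zero, add0l, hz, h0. unfold sub.
    rewrite mul_addr, mulrN, mul_addl, opp_add, mul_assoc, addNK. reflexivity.
  - change (bsum (S K) ?f) with (add (bsum K f) (f K)) at 1.
    rewrite add_assoc, IH by lia.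
    change (bsum (S (S K)) ?f) with (add (bsum (S K) f) (f (S K))).
    rewrite hz, hS. unfold sub.
    replace (S (T - 1 - K)) with (T - K)%nat by lia.
    replace (T - 1 - K)%nat with (T - S K)%nat by lia.
    set (A := mul e (x (S T))). set (Sd := bsum (S K) (fun i => mul (d i) (x (T - i)%nat))).
    set (u := x (T - K)%nat). set (v := x (T - S K)%nat).
    rewrite mul_addr, mulrN, mul_assoc, mul_addl, opp_add.
    rewrite <- !add_assoc. f_equal.
    rewrite add_swap, addNKl, addNCK. apply add_comm.
Qed.
End Alg.

Theorem theorem1 (X : BanachAlgebra) (k : nat) (hk : (1 <= k)%nat)
  (a b : nat -> X) (hab : a k <> zero \/ b k <> zero)
  (g : nat -> X -> X) (sigma : R) (hsigma : 0 < sigma)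
  (hg : forall (n : nat) (xi : X), norm (g n xi) <= sigma * norm xi)
  (hcond :
     sum_f_R0 (fun i => norm (a i) + sigma * norm (b i)) k < 1
     \/
     (exists rho : X, is_unit rho /\ norm rho < 1 /\
        polyP k a rho = zero /\ polyQ k b rho = zero /\
        sum_f_R0 (fun i => norm (pcoef a rho i) + sigma * norm (qcoef b rho i))
                 (k - 1) < 1))
  (y : nat -> X)
  (hrec : forall n : nat,
     y (n + k + 1)%nat =
       add (bsum (S k) (fun i => mul (a i) (y (n + k - i)%nat)))
           (g n (bsum (S k) (fun i => mul (b i) (y (n + k - i)%nat))))) :
  conv_to_zero y.
Proof.
  assert (Hsig : 0 <= sigma) by lra.
  destruct hcond as [Ha | [rho [_ [Hrho [HP [HQ Hs]]]]]].
  - intros eps Heps.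
    apply (decay1 k (fun i => norm (a i) + sigma * norm (b i)) (fun n => norm (y n)));
      auto.
    + intro i. pose proof (norm_ge0 X (a i)); pose proof (norm_ge0 X (b i)); nra.
    + intro n; apply norm_ge0.
    + intro n. rewrite hrec.
      eapply Rle_trans; [apply norm_triangle|].
      eapply Rle_trans; [apply Rplus_le_compat_l; apply hg|].
      eapply Rle_trans; [apply norm_bsum2; exact Hsig|].
      apply sum_Rle; intros i Hi.
      pose proof (norm_mul X (a i) (y (n + k - i)%nat)).
      pose proof (norm_mul X (b i) (y (n + k - i)%nat)).
      nra.
  - destruct k as [|m]; [lia|].
    replace (S m - 1)%nat with m in Hs by lia.
    set (z := fun j => sub (y (S j)) (mul rho (y j))).
    assert (Hz : forall j, z j = sub (y (S j)) (mul rho (y j))) by reflexivity.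
    assert (Hzrec : forall n, z (n + S m)%nat =
       add (g n (bsum (S m) (fun i => mul (qcoef b rho i) (z (n + S m - 1 - i)%nat))))
           (opp (bsum (S m) (fun i => mul (pcoef a rho i) (z (n + S m - 1 - i)%nat))))).
    { intro n.
      pose proof (tele X y z rho one (pcoef a rho) (fun i => opp (a i)) Hz
                    (pcoef0 X a rho) (pcoefS X a rho) (n + S m) (S m) ltac:(lia)) as H1.
      pose proof (tele X y z rho zero (qcoef b rho) b Hz
                    (qcoef0 X b rho) (qcoefS X b rho) (n + S m) (S m) ltac:(lia)) as H2.
      change (pcoef a rho (S m)) with (polyP (S m) a rho) in H1.
      change (qcoef b rho (S m)) with (polyQ (S m) b rho) in H2.
      rewrite HP in H1. rewrite HQ in H2.
      rewrite !mul0r, opp_zero, !add0l in H2.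
      rewrite !mul0r, opp_zero, add0l, !mul_one_l, bsum_mulN in H1.
      replace (S (n + S m)) with (n + S m + 1)%nat in H1 by lia.
      rewrite hrec, <- H2 in H1.
      rewrite (add_comm _ (bsum (S (S m)) _) (g n _)), addK in H1. rewrite <- H1, addK. reflexivity. }
    assert (Hzc : forall eps, eps > 0 -> exists N, forall n, (n >= N)%nat -> norm (z n) < eps).
    { apply (decay1 m (fun i => norm (pcoef a rho i) + sigma * norm (qcoef b rho i))
                     (fun n => norm (z n))); auto.
      + intro i. pose proof (norm_ge0 X (pcoef a rho i)); pose proof (norm_ge0 X (qcoef b rho i)); nra.
      + intro n; apply norm_ge0.
      + intro n. replace (n + m + 1)%nat with (n + S m)%nat by lia. rewrite Hzrec.
        eapply Rle_trans; [apply norm_triangle|].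
        rewrite norm_opp.
        eapply Rle_trans; [apply Rplus_le_compat_r; apply hg|].
        rewrite Rplus_comm.
        eapply Rle_trans; [apply norm_bsum2; exact Hsig|].
        apply sum_Rle; intros i Hi.
        replace (n + S m - 1 - i)%nat with (n + m - i)%nat by lia.
        pose proof (norm_mul X (pcoef a rho i) (z (n + m - i)%nat)).
        pose proof (norm_mul X (qcoef b rho i) (z (n + m - i)%nat)).
        nra. }
    intros eps Heps.
    apply (decay2 (norm rho) (fun n => norm (y n)) (fun n => norm (z n))); auto.
    + apply norm_ge0.
    + intro n; apply norm_ge0.
    + intro n.
      assert (E : y (S n) = add (z n) (mul rho (y n))) by (rewrite Hz; unfold sub; rewrite addNK; reflexivity).
      rewrite E. eapply Rle_trans; [apply norm_triangle|].
      pose proof (norm_mul X rho (y n)). lra.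
Qed.
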